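(* Let $G$ be a finite simple graph. If $\tau^*_2(G) \leq 2\nu(G)$ and $\tau^*_3(G) \leq 2\nu(G)$, then $\tau^*_k(G) \leq 2\nu(G)$ for all integers $k \geq 2$.
   Context: A triangle of $G$ is a set of three pairwise adjacent vertices, identified with its three edges. $\nu(G)$ is the maximum number of pairwise edge-disjoint triangles in $G$. For an integer $k\ge1$, a $k$-multi-transversal of $G$ is a multiset $F$ of edges such that every triangle of $G$ contains at least $k$ elements of $F$ (counted with multiplicity); $\tau^*_k(G)$ is the minimum of $|F|/k$ over all $k$-multi-transversals $F$. *)

(* Defs.v *)
From mathcomp Require Import all_boot all_order all_algebra.
Set Implicit Arguments. Unset Strict Implicit. Unset Printing Implicit Defensive.
Import Order.TTheory GRing.Theory Num.Theory.

Section Triangles.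
Variables (V : finType) (adj : rel V).

Definition simple_graph : Prop := symmetric adj /\ irreflexive adj.

Definition is_edge (e : {set V}) : bool :=
  [exists u, exists v, adj u v && (e == [set u; v])].

Definition is_triangle (t : {set V}) : bool :=
  (#|t| == 3) && [forall u in t, forall v in t, (u != v) ==> adj u v].

Definition tri_edges (t : {set V}) : {set {set V}} :=
  [set e in powerset t | #|e| == 2].

Definition edge_disjoint_triangles (S : {set {set V}}) : bool :=
  [forall t in S, is_triangle t] &&
  [forall t1 in S, forall t2 in S,
     (t1 != t2) ==> [disjoint tri_edges t1 & tri_edges t2]].

Definition nu : nat :=
  \max_(S : {set {set V}} | edge_disjoint_triangles S) #|S|.

(* There is a k-multi-transversal (a multiset of edges, given by a
   multiplicity function) of cardinality exactly n.  Multiplicities are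
   taken in 'I_n.+1, which loses nothing since the total size is n. *)
Definition has_kmt_of_size (k n : nat) : bool :=
  [exists F : {ffun {set V} -> 'I_n.+1},
     [&& [forall e, ~~ is_edge e ==> (F e == ord0)],
         [forall t, is_triangle t ==>
                      (k <= \sum_(e in tri_edges t) (F e : nat))%N]
       & (\sum_(e : {set V}) (F e : nat) == n)]].

(* Trivial upper bound for the minimum: every edge with multiplicity k. *)
Definition kmt_bound (k : nat) : nat := k * #|[set e : {set V} | is_edge e]|.

(* Minimum cardinality of a k-multi-transversal (the minimum is <= kmt_bound k,
   which is attained, so restricting the search to n <= kmt_bound k is exact). *)
Definition min_kmt (k : nat) : nat :=
  \big[minn/kmt_bound k]_(n < (kmt_bound k).+1 | has_kmt_of_size k n) n.

Definition tau_star (k : nat) : rat := ((min_kmt k)%:R / k%:R)%R.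

End Triangles.

(* Main.v *)
Require Import Defs.
From mathcomp Require Import all_boot all_order all_algebra zify.
Set Implicit Arguments. Unset Strict Implicit. Unset Printing Implicit Defensive.
Import Order.TTheory GRing.Theory Num.Theory.

Lemma bigmin_le (I : eqType) (r : seq I) (P : pred I) (F : I -> nat) idx j :
  j \in r -> P j -> (\big[minn/idx]_(i <- r | P i) F i <= F j)%N.
Proof.
elim: r => //= a r IH; rewrite inE big_cons; case/orP => [/eqP<-|Hj] Pj.
  by rewrite Pj geq_minl.
case: (P a); last exact: IH.
exact: leq_trans (geq_minr _ _) (IH Hj Pj).
Qed.

Section Aux.
Variables (V : finType) (adj : rel V).

Lemma minA k : (min_kmt adj k <= kmt_bound adj k)%N.
Proof.
rewrite /min_kmt; apply: (big_ind (fun x => x <= kmt_bound adj k)%N) => //.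
- by move=> x y Hx _; apply: leq_trans (geq_minl _ _) Hx.
- by move=> i _; rewrite -ltnS.
Qed.

Lemma minB k : min_kmt adj k = kmt_bound adj k \/ has_kmt_of_size adj k (min_kmt adj k).
Proof.
rewrite /min_kmt; apply: (big_ind (fun x => x = kmt_bound adj k \/ has_kmt_of_size adj k x)).
- by left.
- by move=> x y Hx Hy; rewrite /minn; case: ifP.
- by move=> i Hi; right.
Qed.

Lemma minD k n : has_kmt_of_size adj k n -> (min_kmt adj k <= n)%N.
Proof.
move=> H; case: (leqP n (kmt_bound adj k)) => Hn; last first.
  by apply: ltnW; apply: leq_ltn_trans (minA k) Hn.
have Hn' : (n < (kmt_bound adj k).+1)%N by rewrite ltnS.
rewrite /min_kmt.
exact: (@bigmin_le _ _ _ (fun i : 'I_(kmt_bound adj k).+1 => nat_of_ord i) _ (Ordinal Hn') (mem_index_enum _) H).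
Qed.

Lemma kmt_add k1 n1 k2 n2 : has_kmt_of_size adj k1 n1 -> has_kmt_of_size adj k2 n2 ->
  has_kmt_of_size adj (k1 + k2) (n1 + n2).
Proof.
move=> /existsP [F1 /and3P [/forallP E1 /forallP T1 /eqP S1]].
move=> /existsP [F2 /and3P [/forallP E2 /forallP T2 /eqP S2]].
have Hb e : ((F1 e : nat) + F2 e < (n1 + n2).+1)%N.
  rewrite ltnS; apply: leq_add; rewrite -ltnS; exact: ltn_ord.
apply/existsP; exists [ffun e => inord (F1 e + F2 e)]; apply/and3P; split.
- apply/forallP => e; apply/implyP => He.
  have := E1 e; have := E2 e; rewrite He /= ffunE => /eqP -> /eqP ->.
  by apply/eqP/val_inj; rewrite /= inordK.
- apply/forallP => t; apply/implyP => Ht.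
  have := T1 t; have := T2 t; rewrite Ht /= => H2 H1.
  under eq_bigr => e _ do rewrite ffunE inordK //.
  by rewrite big_split /=; apply: leq_add.
- under eq_bigr => e _ do rewrite ffunE inordK //.
  by rewrite big_split /= S1 S2.
Qed.

End Aux.

Theorem proposition3 (V : finType) (adj : rel V) :
  simple_graph adj ->
  (tau_star adj 2 <= 2 * (nu adj)%:R)%R ->
  (tau_star adj 3 <= 2 * (nu adj)%:R)%R ->
  forall k : nat, (2 <= k)%N -> (tau_star adj k <= 2 * (nu adj)%:R)%R.
Proof.
move=> _.
have conv k : (0 < k)%N -> (tau_star adj k <= 2 * (nu adj)%:R)%R = (min_kmt adj k <= 2 * nu adj * k)%N.
  move=> Hk; rewrite /tau_star ler_pdivrMr ?ltr0n //.
  by rewrite -natrM -natrM ler_nat.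
rewrite !conv // => H2 H3 k Hk; rewrite conv; last by apply: leq_trans Hk.
set v := nu adj in H2 H3 *.
set E := #|[set e : {set V} | is_edge adj e]|.
have bnd j : (E <= 2 * v)%N -> (min_kmt adj j <= 2 * v * j)%N.
  move=> HE; apply: leq_trans (minA adj j) _.
  by rewrite /kmt_bound -/E mulnC leq_mul2r HE orbT.
case: (minB adj 2) => [e2|h2].
  apply: bnd; move: H2; rewrite e2 /kmt_bound -/E; lia.
case: (minB adj 3) => [e3|h3].
  apply: bnd; move: H3; rewrite e3 /kmt_bound -/E; lia.
have step j : (exists n, has_kmt_of_size adj j n /\ (n <= 2 * v * j)%N) ->
              (exists n, has_kmt_of_size adj (j + 2) n /\ (n <= 2 * v * (j + 2))%N).
  move=> [n [Hn Hle]]; exists (n + min_kmt adj 2); split; first exact: kmt_add.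
  rewrite mulnDr; exact: leq_add.
have P a : (exists n, has_kmt_of_size adj (2 * a + 2) n /\ (n <= 2 * v * (2 * a + 2))%N) /\
           (exists n, has_kmt_of_size adj (2 * a + 3) n /\ (n <= 2 * v * (2 * a + 3))%N).
  elim: a => [|a [IH1 IH2]]; first by split; [exists (min_kmt adj 2) | exists (min_kmt adj 3)].
  have -> : (2 * a.+1 + 2 = (2 * a + 2) + 2)%N by lia.
  have -> : (2 * a.+1 + 3 = (2 * a + 3) + 2)%N by lia.
  by split; apply: step.
have [a [Ha|Ha]] : exists a, k = (2 * a + 2)%N \/ k = (2 * a + 3)%N.
  exists ((k - 2) %/ 2); have := divn_eq (k - 2) 2; have := ltn_pmod (k - 2) (isT : 0 < 2)%N.
  lia.
- have [[n [Hn Hle]] _] := P a; rewrite Ha; apply: leq_trans Hle; exact: minD.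
- have [_ [n [Hn Hle]]] := P a; rewrite Ha; apply: leq_trans Hle; exact: minD.
Qed.
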